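(* Let $R$ be a commutative ring with identity and let $p_0, p_{11}, p_{12}, p_{21}, p_{22}\in R$ be such that $p_0$ divides $p_{11}p_{22}$, $p_{21}$ divides $p_{11}p_{12}$, and $p_{12}$ divides $p_{21}p_{22}$. Set $p_1=p_{11}+p_{12}$ and $p_2=p_{21}+p_{22}$. Then $$\sqrt{(p_0,p_1,p_2)}=\sqrt{(p_0,p_{11},p_{12},p_{21},p_{22})}.$$
   Context: For an ideal $J$ of $R$, $\sqrt{J}$ denotes its radical; $(a_1,\dots,a_k)$ denotes the ideal generated by $a_1,\dots,a_k$. *)

(* Defs.v *)
From HB Require Import structures.
From mathcomp Require Import all_boot all_order all_algebra.
Set Implicit Arguments. Unset Strict Implicit. Unset Printing Implicit Defensive.
Import GRing.Theory.
Local Open Scope ring_scope.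

Definition ideal_gen (R : comPzRingType) (s : seq R) : R -> Prop :=
  fun x => exists c : 'I_(size s) -> R, x = \sum_(i < size s) c i * s`_i.

Definition radical (R : comPzRingType) (J : R -> Prop) : R -> Prop :=
  fun x => exists n : nat, J (x ^+ n).

Definition rdivides (R : comPzRingType) (a b : R) : Prop :=
  exists c : R, b = a * c.

(* Main.v *)
Require Import Defs.
From HB Require Import structures.
From mathcomp Require Import all_boot all_order all_algebra.
From mathcomp Require Import ring.
Local Open Scope ring_scope.
Import GRing.Theory.

Section Aux.
Variable R : comPzRingType.
Variable s : seq R.
Let I := ideal_gen s.

Lemma ig0 : I 0.
Proof. exists (fun _ => 0); by rewrite big1 // => i _; rewrite mul0r. Qed.

Lemma igD x y : I x -> I y -> I (x + y).
Proof.
move=> [c ->] [d ->]; exists (fun i => c i + d i).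
by rewrite -big_split /=; apply: eq_bigr => i _; rewrite mulrDl.
Qed.

Lemma igM r x : I x -> I (r * x).
Proof.
move=> [c ->]; exists (fun i => r * c i).
by rewrite mulr_sumr; apply: eq_bigr => i _; rewrite mulrA.
Qed.

Lemma igMn x n : I x -> I (x *+ n).
Proof. by move=> Hx; rewrite -mulr_natl; apply: igM. Qed.

Lemma igsum (n : nat) (F : 'I_n -> R) : (forall i, I (F i)) -> I (\sum_(i < n) F i).
Proof. by move=> H; apply: big_ind => //; [apply: ig0 | apply: igD]. Qed.

Lemma radD x y : radical I x -> radical I y -> radical I (x + y).
Proof.
move=> [m Hm] [k Hk]; exists (m + k)%N; rewrite exprDn.
apply: igsum => i; apply: igMn.
case: (leqP k i) => Hi.
  have -> : y ^+ i = y ^+ k * y ^+ (i - k) by rewrite -exprD (subnKC Hi).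
  by rewrite mulrA mulrC; apply: igM; apply: igM.
have ->: (m + k - i = m + (k - i))%N by rewrite addnBA // ltnW.
by rewrite exprD -mulrA mulrC; apply: igM.
Qed.

Lemma radM r x : radical I x -> radical I (r * x).
Proof. by move=> [m Hm]; exists m; rewrite exprMn; apply: igM. Qed.

Lemma radI x : I x -> radical I x.
Proof. by move=> H; exists 1%N; rewrite expr1. Qed.

Lemma radsum (n : nat) (F : 'I_n -> R) : (forall i, radical I (F i)) ->
  radical I (\sum_(i < n) F i).
Proof.
move=> H; apply: big_ind => //; [by apply: radI; apply: ig0 | apply: radD].
Qed.

Lemma radX x n : radical I (x ^+ n) -> radical I x.
Proof. by move=> [m Hm]; exists (n * m)%N; rewrite exprM. Qed.

Lemma radP3 x : radical I (x ^+ 3) -> radical I x.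
Proof. exact: radX. Qed.
End Aux.

Theorem proposition1 (R : comPzRingType) (p0 p11 p12 p21 p22 : R) :
  rdivides p0 (p11 * p22) ->
  rdivides p21 (p11 * p12) ->
  rdivides p12 (p21 * p22) ->
  let p1 := p11 + p12 in
  let p2 := p21 + p22 in
  forall x : R,
    radical (ideal_gen [:: p0; p1; p2]) x <->
    radical (ideal_gen [:: p0; p11; p12; p21; p22]) x.
Proof.
move=> [e He] [c Hc] [d Hd] p1 p2 x.
have memJ : forall a b g, ideal_gen [:: p0; p1; p2] (a * p0 + b * p1 + g * p2).
  move=> a b g; exists (fun i : 'I_3 => nth 0 [:: a; b; g] i).
  by rewrite !big_ord_recr big_ord0 /= add0r.
split.
  move=> [n [co Hn]]; exists n; rewrite Hn.
  exists (fun i : 'I_5 => nth 0 [:: co ord0; co (inord 1); co (inord 1);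
                                     co (inord 2); co (inord 2)] i).
  rewrite !big_ord_recr big_ord0 /= !add0r /p1 /p2.
  have -> : (ord_max : 'I_3) = inord 2 by apply: val_inj; rewrite /= inordK.
  have -> : (widen_ord (leqnSn 2) ord_max : 'I_3) = inord 1
    by apply: val_inj; rewrite /= inordK.
  have -> : (widen_ord (leqnSn 2) (widen_ord (leqnSn 1) ord_max) : 'I_3) = ord0
    by apply: val_inj.
  rewrite big_ord0 add0r; ring.
set J := ideal_gen [:: p0; p1; p2].
have r0 : radical J p0.
  by apply: radI; have := memJ 1 0 0; congr ideal_gen; ring.
have r1 : radical J p1.
  by apply: radI; have := memJ 0 1 0; congr ideal_gen; ring.
have r2 : radical J p2.
  by apply: radI; have := memJ 0 0 1; congr ideal_gen; ring.
have e1 : p11 * p21 = p11 * p2 - p0 * e.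
  by rewrite -He /p2; ring.
have r11 : radical J p11.
  apply: (@radX _ _ _ 3); apply: radI.
  have -> : p11 ^+ 3 = (c * e) * p0 + (p11 * p11) * p1 + (- (c * p11)) * p2.
    have -> : p11 ^+ 3 = p11 * p11 * p1 - p11 * (p11 * p12) by rewrite /p1; ring.
    rewrite Hc; transitivity (p11 * p11 * p1 - c * (p11 * p21)); first by ring.
    by rewrite e1; ring.
  exact: memJ.
have r21 : radical J p21.
  apply: (@radX _ _ _ 3); apply: radI.
  have -> : p21 ^+ 3 = (- (d * e)) * p0 + (- (p21 * d)) * p1 + (p21 * p21 + d * p11) * p2.
    have -> : p21 ^+ 3 = p21 * p21 * p2 - p21 * (p21 * p22) by rewrite /p2; ring.
    rewrite Hd; transitivity (p21 * p21 * p2 - p21 * p1 * d + d * (p11 * p21)).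
      by rewrite /p1; ring.
    by rewrite e1; ring.
  exact: memJ.
have r12 : radical J p12.
  have -> : p12 = p1 + (-1) * p11 by rewrite /p1; ring.
  by apply: radD => //; apply: radM.
have r22 : radical J p22.
  have -> : p22 = p2 + (-1) * p21 by rewrite /p2; ring.
  by apply: radD => //; apply: radM.
move=> [n [co Hn]]; apply: (@radX _ _ _ n).
rewrite Hn; apply: radsum => i; apply: radM.
case: i => [[|[|[|[|[|i]]]]] Hi] //=.
Qed.
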